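(* Let $f$ be an axis rule defined for profiles over every finite candidate set, satisfying resistance to cloning, and suppose there are constants $h^*_m,h_m>0$ ($m\ge3$) such that for every finite $C$ with $|C|=m$, $f$ restricted to profiles over $C$ is the scoring rule with $\mathrm{cost}(A,\triangleleft)=0$ if $A$ is an interval of $\triangleleft$, $\mathrm{cost}(A,\triangleleft)=h^*_m$ if $A$ is not an interval of $\triangleleft$ and contains both the leftmost and rightmost candidate of $\triangleleft$, and $\mathrm{cost}(A,\triangleleft)=h_m$ otherwise. Then $h^*_m\ge h_m$ for all $m\ge6$.
   Context: Candidates come from a fixed infinite universe. An approval ballot is a nonempty subset $A\subseteq C$; a profile over $C$ is a finite sequence of ballots. An axis is a strict linear order $\triangleleft$ on $C$. A ballot $A$ is an interval of $\triangleleft$ if for all $a,b\in A$ and every $c$ with $a\triangleleft c\triangleleft b$ we have $c\in A$. The scoring rule with cost $\mathrm{cost}$ returns $\arg\min_{\triangleleft}\sum_{A\in P}\mathrm{cost}(A,\triangleleft)$. Two candidates $a,a'$ are clones in $P$ if for every $A\in P$, $a\in A$ iff $a'\in A$. $P_{-c}$ is the profile over $C\setminus\{c\}$ obtained by removing $c$ from every ballot (ballots becoming empty are discarded); $\triangleleft_{-c}$ is the restriction of $\triangleleft$ to $C\setminus\{c\}$. Resistance to cloning: for every profile $P$ with clones $a,a'$, (1) for every $\triangleleft\in f(P)$, $\triangleleft_{-a}\in f(P_{-a})$, and (2) for every $\triangleleft^*\in f(P_{-a})$ there is $\triangleleft\in f(P)$ with $\triangleleft_{-a}=\triangleleft^*$.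 *)

(* Defs.v *)
From HB Require Import structures.
From mathcomp Require Import all_boot all_order all_algebra.
From mathcomp Require Import finmap.
Set Implicit Arguments. Unset Strict Implicit. Unset Printing Implicit Defensive.
Import Order.TTheory GRing.Theory Num.Theory.
Local Open Scope fset_scope.

Section Defs.
Variable U : choiceType.

Definition infinite_universe : Prop := forall s : seq U, exists x, x \notin s.

Definition ballot_over (C A : {fset U}) : bool := (A != fset0) && (A `<=` C).
Definition profile_over (C : {fset U}) (P : seq {fset U}) : bool :=
  all (ballot_over C) P.

(* An axis (strict linear order) on C, represented by the list of C's elements
   from left to right: a <| b  iff  index a ax < index b ax. *)
Definition is_axis (C : {fset U}) (ax : seq U) : Prop := uniq ax /\ ax =i C.

Definition is_interval (A : {fset U}) (ax : seq U) : bool :=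
  [forall a : A, forall b : A, all (fun c =>
     ((index (val a) ax < index c ax) && (index c ax < index (val b) ax)) ==> (c \in A)) ax].

Definition contains_ends (A : {fset U}) (ax : seq U) : bool :=
  if ax is x :: s then (x \in A) && (last x s \in A) else false.

Definition remove_cand (c : U) (P : seq {fset U}) : seq {fset U} :=
  [seq A `\ c | A <- P & A `\ c != fset0].

Definition restrict_axis (c : U) (ax : seq U) : seq U := [seq x <- ax | x != c].

Definition clones (P : seq {fset U}) (a a' : U) : Prop :=
  forall A, A \in P -> (a \in A) = (a' \in A).

Definition axis_rule (f : {fset U} -> seq {fset U} -> seq U -> Prop) : Prop :=
  forall C P, profile_over C P ->
    (forall ax, f C P ax -> is_axis C ax) /\ (exists ax, f C P ax).

Definition resistant_to_cloning (f : {fset U} -> seq {fset U} -> seq U -> Prop) : Prop :=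
  forall (C : {fset U}) (P : seq {fset U}) (a a' : U),
    profile_over C P -> a \in C -> a' \in C -> a != a' -> clones P a a' ->
    (forall ax, f C P ax -> f (C `\ a) (remove_cand a P) (restrict_axis a ax)) /\
    (forall axs, f (C `\ a) (remove_cand a P) axs ->
       exists ax, f C P ax /\ restrict_axis a ax = axs).

Local Open Scope ring_scope.

Definition cost (R : numDomainType) (hs h : R) (A : {fset U}) (ax : seq U) : R :=
  if is_interval A ax then 0
  else if contains_ends A ax then hs else h.

Definition total_cost (R : numDomainType) (hs h : R) (P : seq {fset U}) (ax : seq U) : R :=
  \sum_(A <- P) cost hs h A ax.

Definition scoring_rule (R : numDomainType) (hs h : R) (C : {fset U})
    (P : seq {fset U}) (ax : seq U) : Prop :=
  is_axis C ax /\
  forall ax', is_axis C ax' -> total_cost hs h P ax <= total_cost hs h P ax'.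

End Defs.

(* Main.v *)
Require Import Defs.
From HB Require Import structures.
From mathcomp Require Import all_boot all_order all_algebra.
From mathcomp Require Import finmap.
From mathcomp Require Import zify ring lra.
Import Order.TTheory GRing.Theory Num.Theory.
Local Open Scope fset_scope.

Section Helpers.
Variable U : choiceType.
Implicit Types (A : {fset U}) (ax s : seq U).

Lemma intervalP A ax : reflect (forall u v c, u \in A -> v \in A -> c \in ax ->
   (index u ax < index c ax < index v ax)%N -> c \in A) (is_interval A ax).
Proof.
apply: (iffP forallP) => [H u v c uA vA cax /andP[h1 h2] | H [u uA]].
- have /forallP/(_ [` vA]) /allP /(_ c cax) := H [` uA].
  by rewrite /= h1 h2.
- apply/forallP => [[v vA]]; apply/allP => c cax; apply/implyP => /andP[h1 h2].
  by apply: (H u v c uA vA cax); rewrite h1 h2.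
Qed.

Lemma interval_block A l1 s l2 : uniq (l1 ++ s ++ l2) -> A =i s ->
  is_interval A (l1 ++ s ++ l2).
Proof.
move=> hu hA; apply/intervalP => u v c uA vA cax /andP[h1 h2].
rewrite hA in uA; rewrite hA in vA; rewrite hA.
move: hu; rewrite cat_uniq => /and3P[_ /hasPn hn _].
have ul1 : u \notin l1 by apply: hn; rewrite mem_cat uA.
have vl1 : v \notin l1 by apply: hn; rewrite mem_cat vA.
move: h1 h2; rewrite !index_cat (negbTE ul1) (negbTE vl1) uA vA.
have := index_mem u s; have := index_mem v s; rewrite uA vA.
have := index_mem c l1.
case: (c \in l1) => /=.
  move=> ? ? ? ? ?; lia.
case cs: (c \in s) => //.
move=> ? ? ? ? ?; lia.
Qed.

Lemma noninterval A ax u v c : u \in A -> v \in A -> c \in ax -> c \notin A ->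
  (index u ax < index c ax < index v ax)%N -> ~~ is_interval A ax.
Proof.
move=> uA vA cax cA hi; apply/negP => /intervalP H.
by rewrite (H u v c uA vA cax hi) in cA.
Qed.

Lemma index_filter_lt (p : pred U) s u v : p u -> p v -> u \in s -> v \in s ->
  (index u s < index v s)%N = (index u (filter p s) < index v (filter p s))%N.
Proof.
move=> pu pv; elim: s => [//|t s IH] /=.
rewrite !inE => uin vin.
case: (eqVneq t u) => [ett|tu] /=.
  subst t; rewrite pu /= eqxx; by case: (u == v).
case: (eqVneq t v) => [ett|tv] /=.
  by subst t; rewrite pv /= eqxx (negbTE tu).
rewrite eq_sym (negbTE tu) in uin; rewrite eq_sym (negbTE tv) in vin.
case: (p t) => /=; rewrite ?(negbTE tu) ?(negbTE tv) ?ltnS; exact: IH.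
Qed.

Lemma restrict_interval A ax c : is_interval A ax ->
  is_interval (A `\ c) (restrict_axis c ax).
Proof.
move/intervalP => H; apply/intervalP => u v d.
rewrite !in_fsetD1 => /andP[uc uA] /andP[vc vA].
rewrite mem_filter => /andP[dc dax] /andP[h1 h2].
rewrite dc /=.
have ufil : u \in restrict_axis c ax.
  by rewrite -index_mem; apply: (ltn_trans h1); rewrite index_mem mem_filter dc.
have uax : u \in ax by move: ufil; rewrite mem_filter => /andP[].
apply: (H u v d uA vA dax); apply/andP; split.
  by rewrite (index_filter_lt (fun t => t != c) ax u d uc dc uax dax).
case vax: (v \in ax).
  by rewrite (index_filter_lt (fun t => t != c) ax d v dc vc dax vax).
by rewrite (memNindex (negbT vax)) index_mem.
Qed.

Lemma nb A ax u v c : is_interval A ax -> u \in A -> v \in A -> c \in ax -> c \notin A ->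
  ~~ ((index u ax < index c ax) && (index c ax < index v ax))%N.
Proof.
move=> I uA vA cax cA; apply/negP => hi.
by rewrite (negbTE (noninterval _ _ _ _ _ uA vA cax cA hi)) in I.
Qed.

Lemma incons A1 A2 A3 ax a' x y z w : uniq ax ->
  a' \in ax -> x \in ax -> y \in ax -> z \in ax -> w \in ax ->
  a' \in A1 -> x \in A1 -> y \notin A1 -> z \notin A1 -> w \notin A1 ->
  x \in A2 -> y \in A2 -> w \in A2 -> a' \notin A2 -> z \notin A2 ->
  x \in A3 -> z \in A3 -> w \in A3 -> a' \notin A3 -> y \notin A3 ->
  ~~ [&& is_interval A1 ax, is_interval A2 ax & is_interval A3 ax].
Proof.
move=> _ a'ax xax yax zax wax a'1 x1 y1 z1 w1 x2 y2 w2 a'2 z2 x3 z3 w3 a'3 y3.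
apply/negP => /and3P[I1 I2 I3].
have dist : forall p q (A : {fset U}), p \in ax -> q \in ax -> p \in A -> q \notin A ->
   index p ax != index q ax.
  move=> p q A pax qax pA qA; apply/negP => /eqP /(index_inj p pax qax) epq.
  by rewrite -epq pA in qA.
have d1 := dist _ _ _ xax a'ax x2 a'2.
have d2 := dist _ _ _ a'ax yax a'1 y1.
have d3 := dist _ _ _ a'ax zax a'1 z1.
have d4 := dist _ _ _ a'ax wax a'1 w1.
have d5 := dist _ _ _ xax yax x1 y1.
have d6 := dist _ _ _ xax zax x1 z1.
have d7 := dist _ _ _ xax wax x1 w1.
have d8 := dist _ _ _ yax zax y2 z2.
have d9 := dist _ _ _ wax yax w3 y3.
have d10 := dist _ _ _ wax zax w2 z2.
have f1 := nb _ _ _ _ _ I2 y2 x2 a'ax a'2.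
have f2 := nb _ _ _ _ _ I2 w2 x2 a'ax a'2.
have f3 := nb _ _ _ _ _ I2 x2 y2 a'ax a'2.
have f4 := nb _ _ _ _ _ I2 x2 w2 a'ax a'2.
have f5 := nb _ _ _ _ _ I3 z3 x3 a'ax a'3.
have f6 := nb _ _ _ _ _ I3 x3 z3 a'ax a'3.
have f7 := nb _ _ _ _ _ I1 a'1 x1 yax y1.
have f8 := nb _ _ _ _ _ I1 x1 a'1 yax y1.
have f9 := nb _ _ _ _ _ I1 a'1 x1 zax z1.
have f10 := nb _ _ _ _ _ I1 x1 a'1 zax z1.
have f11 := nb _ _ _ _ _ I1 a'1 x1 wax w1.
have f12 := nb _ _ _ _ _ I1 x1 a'1 wax w1.
have f13 := nb _ _ _ _ _ I2 x2 y2 zax z2.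
have f14 := nb _ _ _ _ _ I2 x2 w2 zax z2.
have f15 := nb _ _ _ _ _ I2 y2 x2 zax z2.
have f16 := nb _ _ _ _ _ I2 w2 x2 zax z2.
have f17 := nb _ _ _ _ _ I3 x3 z3 yax y3.
have f18 := nb _ _ _ _ _ I3 z3 x3 yax y3.
move: d1 d2 d3 d4 d5 d6 d7 d8 d9 d10 f1 f2 f3 f4 f5 f6 f7 f8 f9 f10 f11 f12 f13 f14 f15 f16 f17 f18.
move: (index a' ax) (index x ax) (index y ax) (index z ax) (index w ax) => iA iX iY iZ iW.
move=> d1 d2 d3 d4 d5 d6 d7 d8 d9 d10 f1 f2 f3 f4 f5 f6 f7 f8 f9 f10 f11 f12 f13 f14 f15 f16 f17 f18.
clear -d1 d2 d3 d4 d5 d6 d7 d8 d9 d10 f1 f2 f3 f4 f5 f6 f7 f8 f9 f10 f11 f12 f13 f14 f15 f16 f17 f18.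
have [h|h] : (iA < iX \/ iX < iA)%N by clear -d1; lia.
  have hy : (iX < iY)%N by clear -h f1 f7 d2 d5; lia.
  have hz : (iX < iZ)%N by clear -h f5 f9 d3 d6; lia.
  clear -hy hz f13 f17 d8; lia.
have hy : (iY < iX)%N by clear -h f3 f8 d2 d5; lia.
have hz : (iZ < iX)%N by clear -h f6 f10 d3 d6; lia.
clear -hy hz f15 f18 d8; lia.
Qed.

Lemma interval_blockE A ax l1 s l2 : ax = l1 ++ s ++ l2 -> uniq ax -> A =i s ->
  is_interval A ax.
Proof. by move=> -> ; apply: interval_block. Qed.

Lemma fresh_seq : infinite_universe U -> forall n, exists s : seq U, uniq s /\ size s = n.
Proof.
move=> inf; elim=> [|n [s [us ss]]]; first by exists [::].
have [t ts] := inf s; exists (t :: s); by rewrite /= ts us ss.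
Qed.

Lemma axis_perm C s t : uniq s -> perm_eq s t -> (forall u, (u \in C) = (u \in s)) ->
  is_axis C t.
Proof.
move=> us pst hC; split; first by rewrite -(perm_uniq pst).
by move=> u; rewrite hC (perm_mem pst).
Qed.

Lemma ends_head A t ax : contains_ends A (t :: ax) -> t \in A.
Proof. by case/andP. Qed.

Lemma ends_headD A D t l : contains_ends A (D ++ t :: l) -> (t \in A) || has (mem A) D.
Proof. by case: D => [|d D] /= /andP[->] //=; rewrite orbT. Qed.

Lemma cons_eq_cat (t u : U) r D l : t :: r = D ++ u :: l -> (t == u) || (t \in D).
Proof. by case: D => [|d D] /= [->]; rewrite ?eqxx ?inE ?eqxx ?orbT. Qed.

Lemma neq_rw (p q : U) : p != q -> ((p == q) = false) * ((q == p) = false).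
Proof. by move=> pq; rewrite (negbTE pq) eq_sym (negbTE pq). Qed.

Lemma restrict_head c t ax : t != c -> restrict_axis c (t :: ax) = t :: restrict_axis c ax.
Proof. by move=> tc; rewrite /restrict_axis /= tc. Qed.

End Helpers.

Section Costs.
Variables (U : choiceType) (R : realFieldType).
Local Open Scope ring_scope.
Implicit Types (A : {fset U}) (ax : seq U) (hs h : R).

Lemma cost_int hs h A ax : is_interval A ax -> cost hs h A ax = 0.
Proof. by rewrite /cost => ->. Qed.
Lemma cost_ends hs h A ax : ~~ is_interval A ax -> contains_ends A ax -> cost hs h A ax = hs.
Proof. by rewrite /cost => /negbTE -> ->. Qed.
Lemma cost_noends hs h A ax : ~~ is_interval A ax -> ~~ contains_ends A ax -> cost hs h A ax = h.
Proof. by rewrite /cost => /negbTE -> /negbTE ->. Qed.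
Lemma cost_ge0 hs h A ax : 0 <= hs -> 0 <= h -> 0 <= cost hs h A ax.
Proof. by rewrite /cost; case: ifP => // _; case: ifP. Qed.
Lemma cost_gek hs h A ax k : ~~ is_interval A ax -> k <= hs -> k <= h -> k <= cost hs h A ax.
Proof. by rewrite /cost => /negbTE ->; case: ifP. Qed.
Lemma total3 hs h A1 A2 A3 ax : total_cost hs h [:: A1; A2; A3] ax =
  cost hs h A1 ax + cost hs h A2 ax + cost hs h A3 ax.
Proof. by rewrite /total_cost !big_cons big_nil addr0 addrA. Qed.

Lemma total3_ge hs h A1 A2 A3 ax k : 0 <= hs -> 0 <= h -> k <= hs -> k <= h ->
  ~~ [&& is_interval A1 ax, is_interval A2 ax & is_interval A3 ax] ->
  k <= total_cost hs h [:: A1; A2; A3] ax.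
Proof.
move=> h0 h1 k0 k1; rewrite total3.
have c1 := cost_ge0 _ _ A1 ax h0 h1; have c2 := cost_ge0 _ _ A2 ax h0 h1; have c3 := cost_ge0 _ _ A3 ax h0 h1.
case I1: (is_interval A1 ax); case I2: (is_interval A2 ax); case I3: (is_interval A3 ax) => // _.
- have := cost_gek _ _ A3 _ _ (negbT I3) k0 k1; lra.
- have := cost_gek _ _ A2 _ _ (negbT I2) k0 k1; lra.
- have := cost_gek _ _ A2 _ _ (negbT I2) k0 k1; lra.
- have := cost_gek _ _ A1 _ _ (negbT I1) k0 k1; lra.
- have := cost_gek _ _ A1 _ _ (negbT I1) k0 k1; lra.
- have := cost_gek _ _ A1 _ _ (negbT I1) k0 k1; lra.
- have := cost_gek _ _ A1 _ _ (negbT I1) k0 k1; lra.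
Qed.
End Costs.
Arguments intervalP {U}. Arguments interval_blockE {U A ax}. Arguments noninterval {U A ax}.
Arguments restrict_interval {U A ax}. Arguments incons {U A1 A2 A3 ax a' x y z w}.
Arguments fresh_seq {U}. Arguments axis_perm {U C s t}. Arguments ends_head {U A t ax}.
Arguments restrict_head {U c t}. Arguments index_filter_lt {U}. Arguments ends_headD {U A D t l}.
Arguments cons_eq_cat {U t u r D l}. Arguments neq_rw {U p q}.
Arguments cost_int {U R hs h A ax}. Arguments cost_ends {U R hs h A ax}.
Arguments cost_noends {U R hs h A ax}. Arguments cost_ge0 {U R hs h} A ax.
Arguments cost_gek {U R hs h A ax k}. Arguments total3 {U R hs h A1 A2 A3 ax}.
Arguments total3_ge {U R hs h A1 A2 A3 ax k}.



Local Open Scope ring_scope.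
Ltac ilia E := rewrite /= ?eqxx ?E ?index_cat ?E /= ?eqxx ?E /=;
  match goal with |- context [size ?D] => let n := fresh "n" in
     (generalize (size D) => n; clear - n; lia) end.
Ltac eqi2 E := let t := fresh in move=> t; rewrite !inE;
  repeat (case: (eqVneq t _) => [->|?]; rewrite ?E ?eqxx /=); done.
Ltac eqi := let t := fresh in move=> t; rewrite !inE; by do ![case: eqP] => //.

Theorem mainTheorem17 (U : choiceType) (R : realFieldType)
    (f : {fset U} -> seq {fset U} -> seq U -> Prop) (hs h : nat -> R) :
  infinite_universe U ->
  axis_rule f ->
  resistant_to_cloning f ->
  (forall m : nat, (3 <= m)%N -> 0 < hs m /\ 0 < h m) ->
  (forall (C : {fset U}) (P : seq {fset U}), (3 <= #|` C|)%N -> profile_over C P ->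
     forall ax, f C P ax <-> scoring_rule (hs #|` C|) (h #|` C|) C P ax) ->
  forall m : nat, (6 <= m)%N -> h m <= hs m.
Proof.
move=> inf rule rtc pos hyp m m6.
rewrite leNgt; apply/negP => hlt.
have [s0 [us0 ss0]] := fresh_seq inf m.
have : (6 <= size s0)%N by rewrite ss0.
case: s0 us0 ss0 => [|a [|a' [|x [|y [|z [|w D]]]]]] //= us ss _.
pose s := [:: a, a', x, y, z, w & D].
pose s' := [:: a', x, y, z, w & D].
have us' : uniq s by [].
have us'' : uniq s' by case/andP: us.
move: us => /andP[Ha /andP[Ha' /andP[Hx /andP[Hy /andP[Hz /andP[Hw uD]]]]]].
move: Ha Ha' Hx Hy Hz Hw; rewrite !inE !negb_or.
move=> /and5P[n1 n2 n3 n4 /andP[n5 aD]] /and5P[n6 n7 n8 n9 a'D] /and4P[n10 n11 n12 xD]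
  /and3P[n13 n14 yD] /andP[n15 zD] wD.
have E := (neq_rw n1, neq_rw n2, neq_rw n3, neq_rw n4, neq_rw n5, neq_rw n6, neq_rw n7,
  neq_rw n8, neq_rw n9, neq_rw n10, neq_rw n11, neq_rw n12, neq_rw n13, neq_rw n14, neq_rw n15,
  (negbTE aD, negbTE a'D, negbTE xD, negbTE yD, negbTE zD, negbTE wD)).
pose C := [fset t in s].
have memC : forall t, (t \in C) = (t \in s) by move=> t; rewrite in_fset.
have cardC : #|` C| = m by rewrite card_fseq undup_id.
pose C' := C `\ a.
have memC' : forall t, (t \in C') = (t \in s').
  move=> t; rewrite in_fsetD1 memC; case: (eqVneq t a) => [->|ta] /=.
    by rewrite !inE ?E.
  by rewrite inE (negbTE ta).
have cardC' : (#|` C'| = m.-1)%N.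
  have := cardfsD1 a C; rewrite cardC memC inE eqxx /= => ->; by rewrite add1n.
pose k := #|` C'|.
have k3 : (3 <= k)%N by rewrite /k cardC'; clear -m6; lia.
have m3 : (3 <= #|` C|)%N by rewrite cardC; clear -m6; lia.
pose B1 := [fset a; a'; x]. pose B2 := [fset x; y; w]. pose B3 := [fset x; z; w].
pose P := [:: B1; B2; B3].
have sub : forall (B : {fset U}), (forall t, t \in B -> t \in s) -> B `<=` C.
  by move=> B hB; apply/fsubsetP => t; rewrite memC => /hB.
have prof : profile_over C P.
{   rewrite /profile_over /= /ballot_over.
  have ne : forall (B : {fset U}) t, t \in B -> B != fset0 by move=> B t tB; apply/fset0Pn; exists t.
  rewrite (ne _ a) ?(ne _ x) ?inE ?eqxx ?orbT //=.
  rewrite (sub B1) ?(sub B2) ?(sub B3) //.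
  all: by move=> t; rewrite !inE; do ![case: eqP] => //. }
have ne : forall (B : {fset U}) t, t \in B -> B != fset0 by move=> B t tB; apply/fset0Pn; exists t.
have eP' : remove_cand a P = [:: B1 `\ a; B2 `\ a; B3 `\ a].
{ rewrite /remove_cand /= (ne _ x) ?(ne (B2 `\ a) x) ?(ne (B3 `\ a) x) //.
  all: by rewrite !inE ?E ?eqxx. }
have sub' : forall (B : {fset U}), (forall t, t \in B -> t \in s') -> B `<=` C'.
  by move=> B hB; apply/fsubsetP => t; rewrite memC' => /hB.
have prof' : profile_over C' (remove_cand a P).
{ rewrite eP' /profile_over /= /ballot_over.
  rewrite (ne _ x) ?(ne (B2 `\ a) x) ?(ne (B3 `\ a) x) ?inE ?E ?eqxx //=.
  rewrite (sub' (B1 `\ a)) ?(sub' (B2 `\ a)) ?(sub' (B3 `\ a)) //.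
  all: by move=> t; rewrite !inE; do ![case: eqP] => //. }
have cl : clones P a a'.
  move=> A; rewrite !inE => /or3P[] /eqP ->; by rewrite !inE ?E ?eqxx.
have aC : a \in C by rewrite memC inE eqxx.
have a'C : a' \in C by rewrite memC !inE eqxx orbT.
have [part1 part2] := rtc C P a a' prof aC a'C n1 cl.
have hm := hyp C P m3 prof; rewrite cardC in hm.
have hk := hyp C' _ k3 prof'.
have [hsm0 hm0] := pos m (leq_trans (isT : (3 <= 6)%N) m6).
have [hsk0 hk0] := pos k k3.
pose t0 := [:: a & D ++ [:: y; x; w; z; a']].
pose s0 := D ++ [:: y; x; w; z; a'].
pose s2 := [:: y & D ++ [:: a'; x; z; w]].
pose s1 := D ++ [:: a'; x; y; w; z].
have axt0 : is_axis C t0.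
{ apply: (axis_perm us' _ memC); apply/permP => p; rewrite /= !count_cat /=.
  move: (count p D) (p a) (p a') (p x) (p y) (p z) (p w) => n b1 b2 b3 b4 b5 b6. 
  clear; lia. }
have axs2 : is_axis C' s2.
{ apply: (axis_perm us'' _ memC'); apply/permP => p; rewrite /= !count_cat /=.
  move: (count p D) (p a') (p x) (p y) (p z) (p w) => n b2 b3 b4 b5 b6. 
  clear; lia. }
have axs1 : is_axis C' s1.
{ apply: (axis_perm us'' _ memC'); apply/permP => p; rewrite /= !count_cat /=.
  move: (count p D) (p a') (p x) (p y) (p z) (p w) => n b2 b3 b4 b5 b6. 
  clear; lia. }
have LBm : forall ax, is_axis C ax ->
    ~~ [&& is_interval B1 ax, is_interval B2 ax & is_interval B3 ax].
{ move=> ax [uax max]; apply/negP => /and3P[i1 i2 i3].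
  have H := @incons U (B1 `\ a) (B2 `\ a) (B3 `\ a) (restrict_axis a ax) a' x y z w
     (filter_uniq _ uax).
  rewrite (restrict_interval a i1) (restrict_interval a i2) (restrict_interval a i3) /= in H.
  suff : (false : bool) by []. apply: H.
  all: by rewrite ?mem_filter ?max ?memC !inE ?E ?eqxx ?orbT. }
have LBk : forall ax, is_axis C' ax ->
    ~~ [&& is_interval (B1 `\ a) ax, is_interval (B2 `\ a) ax & is_interval (B3 `\ a) ax].
{ move=> ax [uax max].
  apply: (@incons U (B1 `\ a) (B2 `\ a) (B3 `\ a) ax a' x y z w uax).
  all: by rewrite ?max ?memC' !inE ?E ?eqxx ?orbT. }
have tt0 : total_cost (hs m) (h m) P t0 = hs m.
{ rewrite total3 (cost_ends (A := B1)) ?(cost_int (A := B2)) ?(cost_int (A := B3)) ?addr0 //.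
  - apply: (interval_blockE (a :: D ++ [:: y]) [:: x; w; z] [:: a']).
    + by rewrite /t0 /= -catA.
    + exact: axt0.1.
    + eqi.
  - apply: (interval_blockE (a :: D) [:: y; x; w] [:: z; a']) => //.
    + exact: axt0.1.
    + eqi.
  - apply: (noninterval a a' y); rewrite /t0 ?inE ?mem_cat ?inE ?E ?eqxx ?orbT //.
    ilia E.
  - by rewrite /t0 /contains_ends /= last_cat /= !inE ?eqxx ?orbT. }
have [hle|hlt'] := lerP (h k) (hs k).
- have c11 : cost (hs k) (h k) (B1 `\ a) s1 = 0.
  { apply: cost_int; apply: (interval_blockE D [:: a'; x] [:: y; w; z]) => //.
    + exact: (proj1 axs1).
    + eqi2 E. }
  have c12 : cost (hs k) (h k) (B2 `\ a) s1 = 0.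
  { apply: cost_int; apply: (interval_blockE (D ++ [:: a']) [:: x; y; w] [:: z]).
    + by rewrite /s1 -catA.
    + exact: (proj1 axs1).
    + eqi2 E. }
  have c13 : cost (hs k) (h k) (B3 `\ a) s1 = h k.
  { apply: cost_noends.
    - apply: (noninterval x z y); rewrite /s1 ?inE ?mem_cat ?inE ?E ?eqxx ?orbT //.
      ilia E.
    - apply/negP; rewrite /s1 => /ends_headD /orP[]; first by rewrite !inE ?E.
      case/hasP => t tD; rewrite inE => tB; move: tB; rewrite !inE.
      by do ![case: eqP => [eta|_]; first by rewrite eta ?E in tD]. }
  have fs1 : f C' (remove_cand a P) s1.
  { apply/hk; split => // ax' axs'; rewrite eP' total3 c11 c12 c13 !add0r.
    apply: total3_ge; [exact: ltW hsk0 | exact: ltW hk0 | exact: hle | exact: lexx | exact: LBk axs']. }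
  have [t [ft et]] := part2 _ fs1.
  have [axt optt] := (hm t).1 ft.
  have := optt t0 axt0; rewrite tt0 total3.
  have tin : forall u, u \in s -> u \in t by move=> u us; rewrite (proj2 axt) memC.
  have ct3 : cost (hs m) (h m) B3 t = h m.
  { apply: cost_noends.
    - apply: (noninterval x z y); rewrite ?inE ?eqxx ?orbT ?E //.
        by apply: tin; rewrite !inE eqxx ?orbT.
      have xt : x \in t by apply: tin; rewrite !inE eqxx ?orbT.
      have yt : y \in t by apply: tin; rewrite !inE eqxx ?orbT.
      have zt : z \in t by apply: tin; rewrite !inE eqxx ?orbT.
      rewrite (index_filter_lt (fun u => u != a) t x y) ?E //.
      rewrite (index_filter_lt (fun u => u != a) t y z) ?E //.
      rewrite /restrict_axis in et; rewrite et /s1.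
      ilia E.
    - apply/negP; case: t ft et axt optt tin => [|u t'] ft et axt optt tin.
        by have := tin a; rewrite !inE eqxx => /(_ isT).
      move=> /ends_head uB.
      have ua : u != a by apply/eqP => eua; move: uB; rewrite eua !inE ?E.
      rewrite (restrict_head _ ua) /s1 in et.
      case/orP: (cons_eq_cat et) => [/eqP eua'|uinD].
        by move: uB; rewrite eua' !inE ?E.
      move: uB; rewrite !inE.
      by do ![case: eqP => [eta|_]; first by rewrite eta ?E in uinD]. }
  have ct1 := cost_ge0 (hs := hs m) (h := h m) B1 t (ltW hsm0) (ltW hm0).
  have ct2 := cost_ge0 (hs := hs m) (h := h m) B2 t (ltW hsm0) (ltW hm0).
  rewrite ct3; move: ct1 ct2 hlt; clear; lra.
- have ft0 : f C P t0.
  { apply/hm; split => // ax' axs'; rewrite tt0.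
    apply: total3_ge; [exact: ltW hsm0 | exact: ltW hm0 | exact: lexx | exact: ltW hlt | exact: LBm axs']. }
  have fs0 := part1 _ ft0.
  have er : restrict_axis a t0 = s0.
  { rewrite /restrict_axis /t0 /= eqxx /= filter_cat /= ?E /=.
    congr (_ ++ _); apply/all_filterP/allP => t tD; apply/eqP => eta.
    by rewrite -eta tD in aD. }
  rewrite er in fs0.
  have [_ opt0] := (hk s0).1 fs0.
  have := opt0 s2 axs2; rewrite eP' !total3.
  have c21 : cost (hs k) (h k) (B1 `\ a) s2 = 0.
  { apply: cost_int; apply: (interval_blockE [:: y & D] [:: a'; x] [:: z; w]) => //.
    + exact: (proj1 axs2).
    + eqi2 E. }
  have c23 : cost (hs k) (h k) (B3 `\ a) s2 = 0.
  { apply: cost_int; apply: (interval_blockE (y :: D ++ [:: a']) [:: x; z; w] [::]).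
    + by rewrite /s2 /= -catA.
    + exact: (proj1 axs2).
    + eqi2 E. }
  have c22 : cost (hs k) (h k) (B2 `\ a) s2 = hs k.
  { apply: cost_ends.
    - apply: (noninterval y w a'); rewrite /s2 ?inE ?mem_cat ?inE ?E ?eqxx ?orbT //.
      ilia E.
    - by rewrite /s2 /contains_ends /= last_cat /= !inE ?E ?eqxx ?orbT. }
  have c01 : cost (hs k) (h k) (B1 `\ a) s0 = h k.
  { apply: cost_noends.
    - apply: (noninterval x a' w); rewrite /s0 ?inE ?mem_cat ?inE ?E ?eqxx ?orbT //.
      ilia E.
    - apply/negP; rewrite /s0 => /ends_headD /orP[]; first by rewrite !inE ?E.
      case/hasP => t tD; rewrite inE => tB; move: tB; rewrite !inE.
      by do ![case: eqP => [eta|_]; first by rewrite eta ?E in tD]. }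
  have c02 := cost_ge0 (hs := hs k) (h := h k) (B2 `\ a) s0 (ltW hsk0) (ltW hk0).
  have c03 := cost_ge0 (hs := hs k) (h := h k) (B3 `\ a) s0 (ltW hsk0) (ltW hk0).
  rewrite c21 c22 c23 c01.
  move: c02 c03 hlt'; clear -hsk0; lra.
Qed.
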